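(* Let $d>0$ be fixed. For every integer $N>d$ put $p=d/N$ and let $D_N(i,j)$, $S_N(i,j)$ ($1\le i,j\le N$) be the mean-field node-based quantities defined in the context. Let $\tilde{\mathcal D}_N:[0,1)^2\to\mathbb R$ be the scaled function defined in the context. Then, as $N\to\infty$, $\tilde{\mathcal D}_N$ converges uniformly on $[0,1)^2$ to $$\mathcal D_\infty(\alpha,\beta)=\frac{d\,e^{d|\beta-\alpha|}}{\bigl(1-e^{-d\min(\alpha,\beta)}+e^{d|\beta-\alpha|}\bigr)^2}.$$ Equivalently, $\mathcal D_\infty(\alpha,\beta)=\dfrac{d\,e^{d(\beta-\alpha)}}{(1-e^{-d\alpha}+e^{d(\beta-\alpha)})^2}$ for all $(\alpha,\beta)$; this expression is symmetric in $(\alpha,\beta)$.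
   Context: Mean-field node-based recursion: fix $N$ and $p\in(0,1]$. For $i,j\in\{1,\dots,N\}$ define $D_N(i,j)$ and $S_N(i,j)$ jointly by $S_N(i,j)=1-\sum_{k=1}^{j-1}D_N(i,k)$, $D_N(i,i)=0$, and $D_N(i,j)=p\,S_N(i,j)\,S_N(j,i)$ for $i\ne j$. (This is well defined by induction on $i+j$, since $S_N(i,j)$ only involves $D_N(i,k)$ with $k<j$.) For $\alpha\in[0,1)$ write $i_N(\alpha)=\lfloor N\alpha\rfloor+1\in\{1,\dots,N\}$. The scaled function is $\tilde{\mathcal D}_N(\alpha,\beta)=N\,D_N(i_N(\alpha),i_N(\beta))$ if $\lfloor N\alpha\rfloor\neq\lfloor N\beta\rfloor$, and $\tilde{\mathcal D}_N(\alpha,\beta)=N p\,S_N(i_N(\alpha),i_N(\alpha))^2$ otherwise. Here $p=d/N$. *)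

(* Defs.v *)
From Stdlib Require Import Reals Lra Lia Arith ZArith.
Open Scope R_scope.

Fixpoint sumR (f : nat -> R) (m : nat) : R :=
  match m with
  | O => 0
  | S m' => sumR f m' + f (S m')
  end.

(* Fuel-based unfolding of the recursion, indices 1-based.
   All recursive calls D(i,k), k<j, and D(j,k), k<i, have index sum < i+j,
   so fuel i+j suffices (the value is independent of extra fuel). *)
Fixpoint D_fuel (fuel : nat) (p : R) (i j : nat) : R :=
  match fuel with
  | O => 0
  | S n =>
      if Nat.eqb i j then 0
      else p * (1 - sumR (fun k => D_fuel n p i k) (j - 1))
             * (1 - sumR (fun k => D_fuel n p j k) (i - 1))
  end.

Definition Dmf (p : R) (i j : nat) : R := D_fuel (i + j) p i j.

Definition Smf (p : R) (i j : nat) : R := 1 - sumR (fun k => Dmf p i k) (j - 1).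

Definition fl (N : nat) (a : R) : nat := Z.to_nat (Int_part (INR N * a)).

Definition iN (N : nat) (a : R) : nat := (fl N a + 1)%nat.

Definition Dtilde (d : R) (N : nat) (a b : R) : R :=
  let p := d / INR N in
  if Nat.eqb (fl N a) (fl N b)
  then INR N * p * (Smf p (iN N a) (iN N a))^2
  else INR N * Dmf p (iN N a) (iN N b).

Definition Dinf (d a b : R) : R :=
  d * exp (d * Rabs (b - a)) /
  (1 - exp (- d * Rmin a b) + exp (d * Rabs (b - a)))^2.

(* Main.v *)
Require Import Defs.
From Stdlib Require Import Reals Lra Lia ZArith.
Open Scope R_scope.

Lemma sumR_ext (f g : nat -> R) (m : nat) :
  (forall k, (1 <= k <= m)%nat -> f k = g k) -> sumR f m = sumR g m.
Proof.
  induction m as [|m IH]; intros H; simpl; [reflexivity|].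
  rewrite IH by (intros; apply H; lia). rewrite H by lia. reflexivity.
Qed.

Lemma fuel_indep (p : R) : forall n m i j, (i + j <= n)%nat -> (i + j <= m)%nat ->
  D_fuel n p i j = D_fuel m p i j.
Proof.
  induction n as [|n IH]; intros m i j Hn Hm.
  - assert (i = 0%nat /\ j = 0%nat) as [-> ->] by lia.
    destruct m; simpl; reflexivity.
  - destruct m as [|m].
    + assert (i = 0%nat /\ j = 0%nat) as [-> ->] by lia. simpl; reflexivity.
    + simpl. destruct (Nat.eqb i j) eqn:E; [reflexivity|].
      apply Nat.eqb_neq in E.
      rewrite (sumR_ext (fun k => D_fuel n p i k) (fun k => D_fuel m p i k)).
      2:{ intros k Hk. apply IH; lia. }
      rewrite (sumR_ext (fun k => D_fuel n p j k) (fun k => D_fuel m p j k)).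
      2:{ intros k Hk. apply IH; lia. }
      reflexivity.
Qed.

Lemma Dmf_eq (p : R) i j : Dmf p i j =
  if Nat.eqb i j then 0 else p * Smf p i j * Smf p j i.
Proof.
  unfold Dmf, Smf. destruct (Nat.eqb i j) eqn:E.
  - apply Nat.eqb_eq in E. subst. destruct (j + j)%nat; simpl; auto.
    rewrite Nat.eqb_refl; auto.
  - apply Nat.eqb_neq in E. remember (i + j)%nat as n eqn:Hn.
    destruct n as [|n]; [lia|]. simpl.
    assert (Nat.eqb i j = false) as -> by (apply Nat.eqb_neq; auto).
    rewrite (sumR_ext (fun k => D_fuel n p i k) (fun k => D_fuel (i + k) p i k)).
    2:{ intros k Hk. apply fuel_indep; lia. }
    rewrite (sumR_ext (fun k => D_fuel n p j k) (fun k => D_fuel (j + k) p j k)).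
    2:{ intros k Hk. apply fuel_indep; lia. }
    reflexivity.
Qed.

Definition T (p : R) (i j : nat) : R := Smf p (S i) (S j).

Lemma T_0 p i : T p i 0 = 1.
Proof. unfold T, Smf. simpl. ring. Qed.

Lemma T_S p i j : T p i (S j) =
  if Nat.eqb i j then T p i j else T p i j * (1 - p * T p j i).
Proof.
  unfold T. unfold Smf at 1. replace (S (S j) - 1)%nat with (S j) by lia.
  simpl sumR. rewrite Dmf_eq. simpl Nat.eqb.
  unfold Smf. replace (S j - 1)%nat with j by lia.
  destruct (Nat.eqb i j); ring.
Qed.

Lemma T_bounds p (hp : 0 < p < 1) : forall i j, 0 < T p i j <= 1.
Proof.
  assert (H : forall n i j, (i + j <= n)%nat -> 0 < T p i j <= 1).
  { induction n as [|n IH]; intros i j Hij.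
    - assert (j = 0%nat) as -> by lia. rewrite T_0; lra.
    - destruct j as [|j]. { rewrite T_0; lra. }
      rewrite T_S. destruct (Nat.eqb i j). { apply IH; lia. }
      destruct (IH i j ltac:(lia)) as [A B].
      destruct (IH j i ltac:(lia)) as [C E].
      split.
      + apply Rmult_lt_0_compat; nra.
      + assert (0 < 1 - p * T p j i <= 1) by nra.
        apply Rle_trans with (T p i j * 1); [apply Rmult_le_compat_l; lra | lra]. }
  intros i j; apply (H (i+j)%nat); lia.
Qed.

Definition fR (x y : R) : R := x / (x + y - 1).

Lemma fR_bounds x y : 1 <= x -> 1 <= y -> 0 < fR x y <= 1.
Proof.
  intros. unfold fR. split.
  - apply Rdiv_lt_0_compat; lra.
  - apply Rmult_le_reg_r with (x + y - 1); [lra|].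
    unfold Rdiv. rewrite Rmult_assoc, Rinv_l by lra. lra.
Qed.

Lemma fR_lip x y x' y' : 1 <= x -> 1 <= y -> 1 <= x' -> 1 <= y' ->
  Rabs (fR x y - fR x' y') <= Rabs (x - x') + Rabs (y - y').
Proof.
  intros. unfold fR.
  replace (x / (x + y - 1) - x' / (x' + y' - 1)) with
    ((x * (y' - y) + (y - 1) * (x - x')) / ((x + y - 1) * (x' + y' - 1)))
    by (field; lra).
  assert (HD : 1 <= (x + y - 1) * (x' + y' - 1)) by nra.
  unfold Rdiv; rewrite Rabs_mult, Rabs_inv. rewrite (Rabs_right ((x + y - 1) * (x' + y' - 1))) by lra.
  apply Rmult_le_reg_r with ((x + y - 1) * (x' + y' - 1)); [lra|].
  unfold Rdiv. rewrite Rmult_assoc, Rinv_l by lra. rewrite Rmult_1_r.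
  eapply Rle_trans; [apply Rabs_triang|].
  rewrite !Rabs_mult. rewrite (Rabs_right x), (Rabs_right (y - 1)) by lra.
  assert (0 <= Rabs (y' - y)) by apply Rabs_pos.
  assert (0 <= Rabs (x - x')) by apply Rabs_pos.
  rewrite Rplus_comm.
  assert (HX : x <= (x + y - 1) * (x' + y' - 1)) by nra.
  assert (HY : y - 1 <= (x + y - 1) * (x' + y' - 1)) by nra.
  assert (x * Rabs (y' - y) <= Rabs (y - y') * ((x + y - 1) * (x' + y' - 1))).
  { rewrite (Rabs_minus_sym y y'). nra. }
  assert ((y - 1) * Rabs (x - x') <= Rabs (x - x') * ((x + y - 1) * (x' + y' - 1))) by nra.
  nra.
Qed.

Lemma upper_id p a b : 0 < p < 1 -> 1 <= a -> 1 <= b ->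
  fR a (b / (1 - p)) = fR a b * (1 - p * fR (b / (1 - p)) a).
Proof.
  intros. unfold fR.
  assert (1 <= b / (1 - p)).
  { apply Rmult_le_reg_r with (1 - p); [lra|]. unfold Rdiv.
    rewrite Rmult_assoc, Rinv_l by lra. nra. }
  field. repeat split; try lra. nra.
Qed.

Lemma lower_est p a b : 0 < p < 1 -> 1 <= a -> 1 <= b ->
  Rabs (fR a (b / (1 - p)) - fR a b * (1 - p * fR b ((1 - p) * a)))
  <= p ^ 2 / (1 - p) ^ 2.
Proof.
  intros Hp Ha Hb. set (q := 1 - p).
  assert (Hq : 0 < q < 1) by (unfold q; lra).
  unfold fR.
  assert (D1 : q * a <= q * a + b - q) by lra.
  assert (D2 : b <= a + b - 1) by lra.
  assert (D3 : q * b <= q * a + b - 1) by (unfold q in *; nra).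
  assert (0 < q * a) by nra. assert (0 < q * b) by nra.
  replace (a / (a + b / q - 1) - a / (a + b - 1) * (1 - p * (b / (b + q * a - 1))))
    with (p ^ 2 * a * b / ((q * a + b - q) * (a + b - 1) * (q * a + b - 1))).
  2:{ unfold q. field. repeat split; unfold q in *; try lra; nra. }
  rewrite Rabs_right.
  2:{ apply Rle_ge. apply Rle_mult_inv_pos. { repeat apply Rmult_le_pos; try lra; apply pow2_ge_0. }
      apply Rmult_lt_0_compat; [apply Rmult_lt_0_compat|]; lra. }
  assert (0 < (q * a + b - q) * (a + b - 1) * (q * a + b - 1)).
  { apply Rmult_lt_0_compat; [apply Rmult_lt_0_compat|]; lra. }
  apply Rmult_le_reg_r with ((q * a + b - q) * (a + b - 1) * (q * a + b - 1)); [lra|].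
  unfold Rdiv at 1. rewrite Rmult_assoc, Rinv_l, Rmult_1_r by lra.
  assert (q*a * b * (q*b) <= (q * a + b - q) * (a + b - 1) * (q * a + b - 1)).
  { apply Rmult_le_compat; try nra. all: apply Rmult_le_compat; nra. }
  assert (p ^ 2 * a * b * (q ^ 2) <= p^2 * (q*a * b * (q*b))).
  { assert (0 <= p^2) by nra. assert (0 <= p^2 * a * q^2) by nra.
    replace (p ^ 2 * (q * a * b * (q * b))) with ((p^2 * a * q^2) * b * b) by ring.
    replace (p ^ 2 * a * b * (q ^ 2)) with ((p^2 * a * q^2) * b * 1) by ring.
    apply Rmult_le_compat_l; [nra|lra]. }
  assert (p ^ 2 * a * b <= p ^ 2 / q ^ 2 * (q * a * b * (q * b))).
  { apply Rmult_le_reg_r with (q^2); [nra|].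
    replace (p ^ 2 / q ^ 2 * (q * a * b * (q * b)) * q ^ 2) with (p^2 * (q * a * b * (q * b))) by (field; lra).
    lra. }
  assert (0 <= p ^ 2 / q ^ 2) by (apply Rle_mult_inv_pos; [apply pow2_ge_0|nra]).
  nra.
Qed.

Definition X (p : R) (k : nat) : R := (/ (1 - p)) ^ k.
Definition s0 (p : R) (i j : nat) : R :=
  if (j <=? i)%nat then fR (X p i) (X p j) else fR (X p i) (X p (j - 1)).
Definition B (p : R) (n : nat) : R := / (1 - p) ^ 2 * p * ((1 + p) ^ n - 1).

Lemma X_ge1 p k : 0 < p < 1 -> 1 <= X p k.
Proof.
  intros. unfold X. assert (1 <= / (1 - p)).
  { rewrite <- Rinv_1. apply Rinv_le_contravar; lra. }
  induction k; simpl; [lra|]. nra.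
Qed.

Lemma X_S p k : 0 < p < 1 -> X p (S k) = X p k / (1 - p).
Proof. intros. unfold X. simpl. unfold Rdiv. ring. Qed.

Lemma step_alg p Tij Tji sij sji tau t :
  0 < p < 1 -> 0 <= Tji <= 1 -> 0 <= sij <= 1 -> Rabs tau <= t ->
  Rabs (Tij * (1 - p * Tji) - (sij * (1 - p * sji) + tau))
  <= Rabs (Tij - sij) + p * Rabs (Tji - sji) + t.
Proof.
  intros.
  replace (Tij * (1 - p * Tji) - (sij * (1 - p * sji) + tau)) with
    ((Tij - sij) * (1 - p * Tji) + (- (p * sij)) * (Tji - sji) + (- tau)) by ring.
  eapply Rle_trans; [apply Rabs_triang|].
  rewrite Rabs_Ropp.
  apply Rplus_le_compat; [|lra].
  eapply Rle_trans; [apply Rabs_triang|].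
  rewrite !Rabs_mult, Rabs_Ropp, Rabs_mult.
  rewrite (Rabs_right (1 - p * Tji)) by nra.
  rewrite (Rabs_right p) by lra. rewrite (Rabs_right sij) by lra.
  assert (0 <= Rabs (Tij - sij)) by apply Rabs_pos.
  assert (0 <= Rabs (Tji - sji)) by apply Rabs_pos.
  apply Rplus_le_compat.
  - assert (0 <= 1 - p * Tji <= 1) by nra.
    apply Rle_trans with (Rabs (Tij - sij) * 1); [apply Rmult_le_compat_l; lra | lra].
  - rewrite Rmult_assoc. apply Rmult_le_compat_l; [lra|].
    apply Rle_trans with (1 * Rabs (Tji - sji)); [apply Rmult_le_compat_r; lra | lra].
Qed.

Lemma B_mono p n : 0 < p < 1 -> B p n <= B p (S n).
Proof.
  intros. unfold B. assert (0 < / (1 - p) ^ 2 * p).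
  { apply Rmult_lt_0_compat; [apply Rinv_0_lt_compat; nra | lra]. }
  assert (1 <= (1 + p) ^ n) by (apply pow_R1_Rle; lra).
  replace ((1+p)^(S n)) with ((1+p)*(1+p)^n) by reflexivity. apply Rmult_le_compat_l; [lra|]. nra.
Qed.

Lemma B_step p n : p < 1 -> B p (S n) = B p n + p * B p n + p ^ 2 / (1 - p) ^ 2.
Proof. intros. unfold B. replace ((1+p)^(S n)) with ((1+p)*(1+p)^n) by reflexivity.
  field. lra. Qed.

Lemma s0_bounds p i j : 0 < p < 1 -> 0 < s0 p i j <= 1.
Proof. intros. unfold s0. destruct (j <=? i)%nat; apply fR_bounds; apply X_ge1; auto. Qed.

Lemma err_bound p (hp : 0 < p < 1) : forall i j, Rabs (T p i j - s0 p i j) <= B p (i + j).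
Proof.
  assert (HB0 : forall n, 0 <= B p n).
  { intros n. unfold B. apply Rmult_le_pos.
    - apply Rmult_le_pos; [apply Rlt_le, Rinv_0_lt_compat; nra|lra].
    - assert (1 <= (1 + p) ^ n) by (apply pow_R1_Rle; lra). lra. }
  assert (H : forall n i j, (i + j <= n)%nat -> Rabs (T p i j - s0 p i j) <= B p (i + j)).
  { induction n as [|n IH]; intros i j Hij.
    - assert (i = 0%nat /\ j = 0%nat) as [-> ->] by lia.
      rewrite T_0. unfold s0. simpl. unfold fR, X. simpl.
      replace (1 - 1 / (1 + 1 - 1)) with 0 by field. rewrite Rabs_R0. apply HB0.
    - destruct j as [|j].
      { rewrite T_0. unfold s0. simpl.
        assert (1 <= X p i) by (apply X_ge1; auto).
        unfold fR. replace (X p 0) with 1 by reflexivity.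
        replace (1 - X p i / (X p i + 1 - 1)) with 0 by (field; lra).
        rewrite Rabs_R0. apply HB0. }
      replace (i + S j)%nat with (S (i + j)) by lia.
      rewrite B_step by lra.
      rewrite T_S. destruct (Nat.eqb i j) eqn:E.
      { apply Nat.eqb_eq in E. subst j.
        unfold s0 at 1. rewrite (proj2 (Nat.leb_nle (S i) i)) by lia.
        replace (S i - 1)%nat with i by lia.
        assert (s0 p i i = fR (X p i) (X p i)) as <-.
        { unfold s0. rewrite Nat.leb_refl. reflexivity. }
        assert (HI := IH i i ltac:(lia)).
        assert (0 <= p * B p (i + i)) by (apply Rmult_le_pos; [lra|apply HB0]).
        assert (0 <= p ^ 2 / (1 - p) ^ 2) by (apply Rle_mult_inv_pos; [apply pow2_ge_0|nra]).
        lra. }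
      apply Nat.eqb_neq in E.
      assert (IH1 := IH i j ltac:(lia)). assert (IH2 := IH j i ltac:(lia)).
      replace (j + i)%nat with (i + j)%nat in IH2 by lia.
      destruct (T_bounds p hp j i) as [Tj1 Tj2].
      destruct (s0_bounds p i j hp) as [sj1 sj2].
      assert (Hs : exists tau, s0 p i (S j) = s0 p i j * (1 - p * s0 p j i) + tau
                   /\ Rabs tau <= p ^ 2 / (1 - p) ^ 2).
      { destruct (Nat.lt_ge_cases i j) as [Hlt|Hge].
        -
          exists 0. split; [|rewrite Rabs_R0; apply Rle_mult_inv_pos; [apply pow2_ge_0|nra]].
          unfold s0. rewrite (proj2 (Nat.leb_nle (S j) i)) by lia.
          rewrite (proj2 (Nat.leb_nle j i)) by lia.
          rewrite (proj2 (Nat.leb_le i j)) by lia.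
          replace (S j - 1)%nat with j by lia.
          destruct j as [|j']; [lia|]. replace (S j' - 1)%nat with j' by lia.
          rewrite X_S by auto. rewrite Rplus_0_r.
          apply upper_id; auto; apply X_ge1; auto.
        -
          assert (Hlt : (j < i)%nat) by lia.
          unfold s0. rewrite (proj2 (Nat.leb_le (S j) i)) by lia.
          rewrite (proj2 (Nat.leb_le j i)) by lia.
          rewrite (proj2 (Nat.leb_nle i j)) by lia.
          destruct i as [|i']; [lia|]. replace (S i' - 1)%nat with i' by lia.
          set (tau := fR (X p (S i')) (X p (S j)) - fR (X p (S i')) (X p j) * (1 - p * fR (X p j) (X p i'))).
          exists tau. split; [unfold tau; ring|].
          unfold tau. rewrite (X_S p j) by auto.
          assert (X p i' = (1 - p) * X p (S i')) as ->.
          { rewrite X_S by auto. field. lra. }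
          apply lower_est; auto; apply X_ge1; auto. }
      destruct Hs as [tau [-> Htau]].
      eapply Rle_trans; [apply step_alg; eauto; lra|].
      apply Rplus_le_compat; [|lra]. apply Rplus_le_compat; [lra|].
      apply Rmult_le_compat_l; lra. }
  intros i j. apply (H (i + j)%nat). lia.
Qed.

Lemma exp_pow_nat (x : R) (k : nat) : exp (INR k * x) = (exp x) ^ k.
Proof.
  induction k as [|k IH]; [simpl; rewrite Rmult_0_l, exp_0; reflexivity|].
  change ((exp x)^(S k)) with (exp x * (exp x)^k).
  rewrite S_INR, Rmult_plus_distr_r, Rmult_1_l, exp_plus, IH. ring.
Qed.

Lemma exp_le' x y : x <= y -> exp x <= exp y.
Proof. intros [H|H]; [apply Rlt_le, exp_increasing; auto | subst; lra]. Qed.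

Lemma exp_diff u v : u <= v -> exp v - exp u <= exp v * (v - u).
Proof.
  intros. assert (exp u = exp v * exp (u - v)) by (rewrite <- exp_plus; f_equal; ring).
  assert (1 + (u - v) <= exp (u - v)) by apply exp_ineq1_le.
  assert (0 < exp v) by apply exp_pos. nra.
Qed.

Lemma X_lower p k : 0 < p < 1 -> exp (INR k * p) <= X p k.
Proof.
  intros. rewrite exp_pow_nat. unfold X. apply pow_incr. split; [apply Rlt_le, exp_pos|].
  assert (1 + - p <= exp (- p)) by apply exp_ineq1_le.
  rewrite exp_Ropp in H0.
  assert (0 < exp p) by apply exp_pos.
  replace (exp p) with (/ / exp p) by (field; lra).
  apply Rinv_le_contravar; lra.
Qed.

Lemma X_upper p k : 0 < p < 1 -> X p k <= exp (INR k * (p / (1 - p))).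
Proof.
  intros. rewrite exp_pow_nat. unfold X. apply pow_incr.
  split; [apply Rlt_le, Rinv_0_lt_compat; lra|].
  assert (1 + p / (1 - p) <= exp (p / (1 - p))) by apply exp_ineq1_le.
  replace (/ (1 - p)) with (1 + p / (1 - p)) by (field; lra). lra.
Qed.

Definition K1 (d : R) : R := 2 * (d + 1) * exp (2 * d + 1).

Lemma X_approx d p k y : 0 < d -> 0 < p <= 1/2 -> 0 <= y <= d ->
  INR k * p <= y <= INR k * p + 2 * p ->
  Rabs (X p k - exp y) <= K1 d * p.
Proof.
  intros Hd Hp Hy Hk.
  set (u := INR k * p) in *.
  assert (Hu0 : 0 <= u) by (unfold u; apply Rmult_le_pos; [apply pos_INR|lra]).
  assert (HL1 := X_lower p k ltac:(lra)).
  assert (HU := X_upper p k ltac:(lra)).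
  replace (INR k * (p / (1 - p))) with (u / (1 - p)) in HU by (unfold u; field; lra).
  fold u in HL1.
  assert (Hq : u <= u / (1 - p) <= 2 * d).
  { split.
    - apply Rmult_le_reg_r with (1 - p); [lra|]. unfold Rdiv.
      rewrite Rmult_assoc, Rinv_l by lra. nra.
    - apply Rmult_le_reg_r with (1 - p); [lra|]. unfold Rdiv.
      rewrite Rmult_assoc, Rinv_l by lra. nra. }
  assert (E1 : exp (u / (1 - p)) - exp u <= exp (2 * d + 1) * (2 * d * p)).
  { eapply Rle_trans; [apply exp_diff; lra|].
    apply Rmult_le_compat; [apply Rlt_le, exp_pos| |apply exp_le'; lra|].
    - assert (u <= u / (1-p)) by lra. lra.
    - replace (u / (1 - p) - u) with (u * (p / (1 - p))) by (field; lra).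
      assert (p / (1 - p) <= 2 * p).
      { apply Rmult_le_reg_r with (1 - p); [lra|]. unfold Rdiv.
        rewrite Rmult_assoc, Rinv_l by lra. nra. }
      assert (0 <= p / (1 - p)) by (apply Rle_mult_inv_pos; lra).
      assert (u <= d) by lra. nra. }
  assert (E2 : exp y - exp u <= exp (2 * d + 1) * (2 * p)).
  { eapply Rle_trans; [apply exp_diff; lra|].
    apply Rmult_le_compat; [apply Rlt_le, exp_pos|lra|apply exp_le'; lra|lra]. }
  assert (Hey : exp u <= exp y) by (apply exp_le'; lra).
  assert (0 < exp (2 * d + 1)) by apply exp_pos.
  unfold K1. apply Rabs_le. split; nra.
Qed.

Lemma B_le p n : 0 < p <= 1/2 -> B p n <= 4 * p * exp (INR n * p).
Proof.
  intros. unfold B. rewrite exp_pow_nat.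
  assert (Hq : / (1 - p) ^ 2 <= 4).
  { replace 4 with (/ / 4) by (field; lra). apply Rinv_le_contravar; [lra|]. nra. }
  assert (Hp1 : (1 + p) ^ n <= exp p ^ n).
  { apply pow_incr. split; [lra|]. apply exp_ineq1_le. }
  assert (1 <= (1 + p) ^ n) by (apply pow_R1_Rle; lra).
  assert (0 <= / (1 - p) ^ 2) by (apply Rlt_le, Rinv_0_lt_compat; nra).
  apply Rle_trans with (4 * p * ((1 + p) ^ n - 1)).
  - replace (/ (1 - p) ^ 2 * p * ((1 + p) ^ n - 1)) with (/ (1 - p) ^ 2 * (p * ((1 + p) ^ n - 1))) by ring.
    replace (4 * p * ((1 + p) ^ n - 1)) with (4 * (p * ((1 + p) ^ n - 1))) by ring.
    apply Rmult_le_compat_r; [nra|lra].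
  - nra.
Qed.

Lemma fl_spec N a : 0 <= a -> 0 <= INR N ->
  INR (fl N a) <= INR N * a < INR (fl N a) + 1.
Proof.
  intros Ha HN. unfold fl.
  destruct (base_Int_part (INR N * a)) as [H1 H2].
  assert (H0 : (0 <= Int_part (INR N * a))%Z).
  { assert (-1 < IZR (Int_part (INR N * a))) by (assert (0 <= INR N * a) by (apply Rmult_le_pos; lra); lra).
    destruct (Z_lt_le_dec (Int_part (INR N * a)) 0) as [Hl|Hl]; [|auto].
    assert (IZR (Int_part (INR N * a)) <= -1) by (apply IZR_le; lia).
    lra. }
  rewrite INR_IZR_INZ, Z2Nat.id by auto. lra.
Qed.

Lemma Dinf_eq d a b : 0 <= a -> 0 <= b -> 0 < d ->
  Dinf d a b = d * fR (exp (d * a)) (exp (d * b)) * fR (exp (d * b)) (exp (d * a)).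
Proof.
  intros Ha Hb Hd. unfold Dinf, fR.
  assert (A1 : 1 <= exp (d * a)).
  { rewrite <- exp_0. apply exp_le'. nra. }
  assert (B1 : 1 <= exp (d * b)).
  { rewrite <- exp_0. apply exp_le'. nra. }
  destruct (Rle_lt_dec a b) as [H|H].
  - rewrite Rabs_right by lra. rewrite Rmin_left by lra.
    replace (d * (b - a)) with (d * b + - (d * a)) by ring.
    replace (- d * a) with (- (d * a)) by ring.
    rewrite exp_plus, exp_Ropp. field. split; [lra|].
    intro. assert (exp (d*a) - 1 + exp (d*b) = 0).
    { replace (exp (d*a) - 1 + exp (d*b)) with (exp (d*a) * (1 - / exp (d * a) + exp (d * b) * / exp (d * a))) by (field; lra). rewrite H0; ring. }
    lra.
  - rewrite Rabs_left by lra. rewrite Rmin_right by lra.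
    replace (d * - (b - a)) with (d * a + - (d * b)) by ring.
    replace (- d * b) with (- (d * b)) by ring.
    rewrite exp_plus, exp_Ropp. field. split; [lra|].
    intro. assert (exp (d*b) - 1 + exp (d*a) = 0).
    { replace (exp (d*b) - 1 + exp (d*a)) with (exp (d*b) * (1 - / exp (d * b) + exp (d * a) * / exp (d * b))) by (field; lra). rewrite H0; ring. }
    lra.
Qed.

Lemma Dtilde_eq d N a b : 0 < INR N ->
  Dtilde d N a b = d * T (d / INR N) (fl N a) (fl N b) * T (d / INR N) (fl N b) (fl N a).
Proof.
  intros HN. unfold Dtilde, iN. rewrite !Nat.add_1_r.
  destruct (Nat.eqb (fl N a) (fl N b)) eqn:E.
  - apply Nat.eqb_eq in E. rewrite <- E. unfold T. field. lra.
  - rewrite Dmf_eq. simpl Nat.eqb. rewrite E. unfold T. field. lra.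
Qed.

Lemma fl_scaled d N a : 0 < d -> 0 < INR N -> 0 <= a ->
  INR (fl N a) * (d / INR N) <= d * a < INR (fl N a) * (d / INR N) + d / INR N.
Proof.
  intros Hd HN Ha. destruct (fl_spec N a Ha ltac:(lra)) as [H1 H2].
  assert (0 < d / INR N) by (apply Rdiv_lt_0_compat; lra).
  split.
  - replace (d * a) with ((INR N * a) * (d / INR N)) by (field; lra).
    apply Rmult_le_compat_r; lra.
  - replace (d * a) with ((INR N * a) * (d / INR N)) by (field; lra).
    replace (INR (fl N a) * (d / INR N) + d / INR N) with ((INR (fl N a) + 1) * (d / INR N)) by ring.
    apply Rmult_lt_compat_r; lra.
Qed.

Lemma approx_fl d N b k : 0 < d -> 0 < INR N -> d / INR N <= 1/2 -> 0 <= b < 1 ->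
  (k = fl N b \/ (1 <= fl N b /\ k = fl N b - 1)%nat) ->
  Rabs (X (d / INR N) k - exp (d * b)) <= K1 d * (d / INR N).
Proof.
  intros Hd HN Hp Hb Hk.
  assert (Hp0 : 0 < d / INR N) by (apply Rdiv_lt_0_compat; lra).
  destruct (fl_scaled d N b Hd HN ltac:(lra)) as [H1 H2].
  apply X_approx; [lra|lra|split; nra|].
  destruct Hk as [->|[H3 ->]]; [lra|].
  rewrite minus_INR by lia. simpl INR. lra.
Qed.

Lemma core d N a b : 0 < d -> 0 < INR N -> d / INR N <= 1/2 -> 0 <= a < 1 -> 0 <= b < 1 ->
  Rabs (T (d / INR N) (fl N a) (fl N b) - fR (exp (d * a)) (exp (d * b)))
  <= 4 * (d / INR N) * exp (2 * d) + 2 * (K1 d * (d / INR N)).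
Proof.
  intros Hd HN Hp Ha Hb. set (p := d / INR N) in *.
  assert (Hp0 : 0 < p) by (unfold p; apply Rdiv_lt_0_compat; lra).
  set (I := fl N a). set (J := fl N b).
  destruct (fl_scaled d N a Hd HN ltac:(lra)) as [Ia1 Ia2]. fold p I in Ia1, Ia2.
  destruct (fl_scaled d N b Hd HN ltac:(lra)) as [Jb1 Jb2]. fold p J in Jb1, Jb2.
  assert (E1 : Rabs (T p I J - s0 p I J) <= 4 * p * exp (2 * d)).
  { eapply Rle_trans; [apply err_bound; lra|].
    eapply Rle_trans; [apply B_le; lra|].
    apply Rmult_le_compat_l; [lra|]. apply exp_le'.
    rewrite plus_INR. nra. }
  assert (Ea1 : 1 <= exp (d * a)) by (rewrite <- exp_0; apply exp_le'; nra).
  assert (Eb1 : 1 <= exp (d * b)) by (rewrite <- exp_0; apply exp_le'; nra).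
  assert (E2 : Rabs (s0 p I J - fR (exp (d * a)) (exp (d * b))) <= 2 * (K1 d * p)).
  { assert (HA := approx_fl d N a I Hd HN Hp Ha (or_introl eq_refl)). fold p in HA.
    unfold s0. destruct (J <=? I)%nat eqn:EJ.
    - eapply Rle_trans; [apply fR_lip; try apply X_ge1; try lra|].
      assert (HB := approx_fl d N b J Hd HN Hp Hb (or_introl eq_refl)). fold p in HB.
      lra.
    - apply Nat.leb_nle in EJ.
      eapply Rle_trans; [apply fR_lip; try apply X_ge1; try lra|].
      assert (HJ1 : (1 <= fl N b)%nat) by (unfold J in EJ; lia).
      assert (HB := approx_fl d N b (J - 1) Hd HN Hp Hb (or_intror (conj HJ1 eq_refl))).
      fold p in HB. lra. }
  eapply Rle_trans; [|apply Rplus_le_compat; [exact E1|exact E2]].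
  replace (T p I J - fR (exp (d * a)) (exp (d * b))) with
    ((T p I J - s0 p I J) + (s0 p I J - fR (exp (d * a)) (exp (d * b)))) by ring.
  apply Rabs_triang.
Qed.

Lemma prod_lip x1 x2 y1 y2 : 0 <= x2 <= 1 -> 0 <= y1 <= 1 ->
  Rabs (x1 * x2 - y1 * y2) <= Rabs (x1 - y1) + Rabs (x2 - y2).
Proof.
  intros. replace (x1 * x2 - y1 * y2) with ((x1 - y1) * x2 + y1 * (x2 - y2)) by ring.
  eapply Rle_trans; [apply Rabs_triang|]. rewrite !Rabs_mult.
  rewrite (Rabs_right x2), (Rabs_right y1) by lra.
  assert (0 <= Rabs (x1 - y1)) by apply Rabs_pos.
  assert (0 <= Rabs (x2 - y2)) by apply Rabs_pos.
  apply Rplus_le_compat; nra.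
Qed.

Theorem theorem1 (d : R) (hd : 0 < d) :
  forall eps : R, 0 < eps ->
  exists N0 : nat, forall N : nat, (N0 <= N)%nat -> d < INR N ->
  forall a b : R, 0 <= a < 1 -> 0 <= b < 1 ->
  Rabs (Dtilde d N a b - Dinf d a b) < eps.
Proof.
  intros eps Heps.
  set (C := 2 * (4 * exp (2 * d) + 2 * K1 d)).
  assert (HC : 0 < C).
  { unfold C, K1. assert (0 < exp (2*d)) by apply exp_pos.
    assert (0 < exp (2*d+1)) by apply exp_pos. nra. }
  destruct (INR_unbounded (Rmax (2 * d) (d * (d * C) / eps))) as [N0 HN0].
  exists N0. intros N HN Hd a b Ha Hb.
  assert (HNN : INR N0 <= INR N) by (apply le_INR; auto).
  assert (H1 := Rmax_l (2 * d) (d * (d * C) / eps)).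
  assert (H2 := Rmax_r (2 * d) (d * (d * C) / eps)).
  assert (HN0' : 0 < INR N) by lra.
  set (p := d / INR N).
  assert (Hp : p <= 1/2).
  { unfold p. apply Rmult_le_reg_r with (INR N); [lra|]. unfold Rdiv.
    rewrite Rmult_assoc, Rinv_l by lra. lra. }
  assert (Hp0 : 0 < p) by (unfold p; apply Rdiv_lt_0_compat; lra).
  rewrite Dtilde_eq by lra. rewrite Dinf_eq by lra. fold p.
  assert (Ea1 : 1 <= exp (d * a)) by (rewrite <- exp_0; apply exp_le'; nra).
  assert (Eb1 : 1 <= exp (d * b)) by (rewrite <- exp_0; apply exp_le'; nra).
  assert (C1 := core d N a b hd HN0' Hp Ha Hb). fold p in C1.
  assert (C2 := core d N b a hd HN0' Hp Hb Ha). fold p in C2.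
  destruct (T_bounds p ltac:(lra) (fl N b) (fl N a)) as [T1 T2].
  destruct (fR_bounds (exp (d * a)) (exp (d * b)) Ea1 Eb1) as [F1 F2].
  replace (d * T p (fl N a) (fl N b) * T p (fl N b) (fl N a) -
     d * fR (exp (d * a)) (exp (d * b)) * fR (exp (d * b)) (exp (d * a))) with
    (d * (T p (fl N a) (fl N b) * T p (fl N b) (fl N a) -
     fR (exp (d * a)) (exp (d * b)) * fR (exp (d * b)) (exp (d * a)))) by ring.
  rewrite Rabs_mult, (Rabs_right d) by lra.
  assert (HP := prod_lip (T p (fl N a) (fl N b)) (T p (fl N b) (fl N a))
     (fR (exp (d * a)) (exp (d * b))) (fR (exp (d * b)) (exp (d * a))) ltac:(lra) ltac:(lra)).
  assert (Hsum : Rabs (T p (fl N a) (fl N b) * T p (fl N b) (fl N a) -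
     fR (exp (d * a)) (exp (d * b)) * fR (exp (d * b)) (exp (d * a))) <= p * C).
  { unfold C. lra. }
  assert (Hfin : d * (p * C) < eps).
  { unfold p. assert (d * (d * C) / eps < INR N) by lra.
    replace (d * (d / INR N * C)) with (d * (d * C) / INR N) by (field; lra).
    apply Rmult_lt_reg_r with (INR N); [lra|]. unfold Rdiv at 1. rewrite Rmult_assoc, Rinv_l, Rmult_1_r by lra.
    apply Rmult_lt_reg_r with (/ eps); [apply Rinv_0_lt_compat; lra|].
    replace (eps * INR N * / eps) with (INR N) by (field; lra). exact H. }
  apply Rle_lt_trans with (d * (p * C)); [|exact Hfin].
  apply Rmult_le_compat_l; lra.
Qed.
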